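(* Let $F$ be any field, $N\in\mathbb{N}$, and $p,p'\in\mathbb{N}$ with $p+p'\le N+1$. Let $r\in\mathbb{N}$ satisfy $r+1\le p$ and $r+1\le p'$. Let $x\in F^{N+1}$. Then $\operatorname{rank}(H_{p,p'-1}(x))\le r$ if and only if $\operatorname{rank}(H_{p-1,p'}(x))\le r$.
   Context: $\mathbb{N}=\{0,1,2,\ldots\}$. For $N\in\mathbb{N}$, $x=(x_0,\ldots,x_N)\in F^{N+1}$ and integers $s,t\ge -1$ with $s+t\le N$, the Hankel matrix $H_{s,t}(x)$ is the $(s+1)\times(t+1)$ matrix $(x_{i+j})_{0\le i\le s,\,0\le j\le t}$. *)

(* Defs.v *)
From HB Require Import structures.
From mathcomp Require Import all_boot all_order all_algebra.
Set Implicit Arguments. Unset Strict Implicit. Unset Printing Implicit Defensive.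
Import GRing.Theory.
Local Open Scope ring_scope.

(* Hankel matrix H_{s,t}(x) = (x_{i+j})_{0<=i<=s, 0<=j<=t}, an
   (s+1) x (t+1) matrix; meaningful when s + t <= N (otherwise indices
   beyond N are clamped by inord, but we only use it with s + t <= N). *)
Definition hankel (F : fieldType) (N : nat) (s t : nat) (x : 'rV[F]_N.+1)
  : 'M[F]_(s.+1, t.+1) :=
  \matrix_(i < s.+1, j < t.+1) x ord0 (inord (i + j)).

(* Main.v *)
Require Import Defs.
From mathcomp Require Import all_boot all_order all_algebra.
From mathcomp Require Import zify.
Import GRing.Theory.
Local Open Scope ring_scope.

Lemma hankel_tr (F : fieldType) (N s t : nat) (x : 'rV[F]_N.+1) :
  (hankel s t x)^T = hankel t s x.
Proof. by apply/matrixP => i j; rewrite !mxE addnC. Qed.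

Lemma key (F : fieldType) (N s t r : nat) (x : 'rV[F]_N.+1) :
  (\rank (hankel s t.+1 x) <= r)%N -> (r < s.+1)%N ->
  (\rank (hankel s.+1 t x) <= r)%N.
Proof.
move=> hr rs.
set H1 := hankel s t.+1 x; set H2 := hankel s.+1 t x.
set K := kermx H1.
have rK : \rank K = (s.+1 - \rank H1)%N by rewrite mxrank_ker.
pose K1 := \matrix_(i < s.+1, j < s.+2)
   (if (j < s.+1)%N then K i (inord j) else 0).
pose K2 := \matrix_(i < s.+1, j < s.+2)
   (if (j : nat) is k.+1 then K i (inord k) else 0).
have kerK : K *m H1 = 0 := mulmx_ker H1.
clearbody K.
have hK1 : K1 *m H2 = 0.
  apply/matrixP => i j; rewrite !mxE big_ord_recr /= !mxE ltnn mul0r addr0.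
  move/matrixP: (kerK) => /(_ i (widen_ord (leqnSn t.+1) j)).
  rewrite !mxE => E; rewrite -[RHS]E; apply: eq_bigr => k _.
  by rewrite !mxE /= ifT // inord_val.
have hK2 : K2 *m H2 = 0.
  apply/matrixP => i j; rewrite !mxE big_ord_recl /= !mxE mul0r add0r.
  move/matrixP: (kerK) => /(_ i (lift ord0 j)).
  rewrite !mxE => E; rewrite -[RHS]E; apply: eq_bigr => k _.
  by rewrite !mxE /= inord_val addSnnS.
have hV : ((K1 + K2)%MS <= kermx H2)%MS.
  by rewrite addsmx_sub !sub_kermx hK1 hK2 eqxx.
have rV := mxrankS hV; rewrite mxrank_ker in rV.
pose P := \matrix_(k < s.+2, j < s.+1) ((k : nat) == (j : nat))%:R : 'M[F]_(s.+2, s.+1).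
have KP : K = K1 *m P.
  apply/matrixP => i j; rewrite !mxE big_ord_recr /= !mxE ltnn mul0r addr0.
  have we : forall k : 'I_s.+1, (widen_ord (leqnSn s.+1) k : nat) = k by [].
  rewrite (bigD1 j) //= !mxE !we ltn_ord inord_val eqxx mulr1 big1 ?addr0 //.
  move=> k hk; rewrite !mxE !we ltn_ord inord_val.
  by case: eqP => [/val_inj e|_]; [rewrite e eqxx in hk | rewrite mulr0].
have rK1 : (\rank K <= \rank K1)%N by rewrite {1}KP mxrankM_maxl.
have Knz : K != 0.
  rewrite -mxrank_eq0 rK /H1; apply/eqP; lia.
have [i0 [j0 nz0]] : exists i j, K i j != 0.
  case: (boolP [exists i, exists j, K i j != 0]) =>
      [/existsP[i /existsP[j h]]|/negP hn]; first by exists i, j.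
  case/eqP: Knz; apply/matrixP => i j; rewrite mxE; apply/eqP/negPn/negP => h.
  by apply: hn; apply/existsP; exists i; apply/existsP; exists j.
pose Q := fun n : nat => (n < s.+1)%N && [exists i, K i (inord n) != 0].
have exQ : exists n, Q n.
  exists (j0 : nat); rewrite /Q ltn_ord inord_val; apply/existsP; exists i0.
  exact: nz0.
have ubQ : forall n, Q n -> (n <= s)%N by move=> n /andP[].
case: (ex_maxnP exQ ubQ) => d /andP[ds /existsP[i nzi]] maxd.
have lt : (K1 < K1 + K2)%MS.
  rewrite ltmxE addsmxSl /=; apply/negP => sub.
  have : (row i K2 <= K1)%MS.
    exact: submx_trans (row_sub i K2) (submx_trans (addsmxSr K1 K2) sub).
  case/submxP => u eq.
  move/matrixP: eq => /(_ 0 (inord d.+1)).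
  rewrite !mxE inordK //= big1; first by move/eqP; rewrite (negbTE nzi).
  move=> k _; rewrite !mxE inordK //; case: ifP => h; last by rewrite mulr0.
  case: (eqVneq (K k (inord d.+1)) 0) => [->|nzk]; first by rewrite mulr0.
  have : Q d.+1 by rewrite /Q h; apply/existsP; exists k.
  by move/maxd; rewrite ltnn.
have := rank_ltmx lt; have := rank_leq_row H2.
move: rV rK1 rK hr; rewrite /H1 /H2; lia.
Qed.

Theorem lemma9 (F : fieldType) (N p p' r : nat) (x : 'rV[F]_N.+1) :
  (p + p' <= N + 1)%N -> (r + 1 <= p)%N -> (r + 1 <= p')%N ->
  ((\rank (hankel p (p' - 1) x) <= r)%N <->
   (\rank (hankel (p - 1) p' x) <= r)%N).
Proof.
move=> _ hp hp'.
case: p hp => [|a] hp; first by rewrite addn1 in hp.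
case: p' hp' => [|b] hp'; first by rewrite addn1 in hp'.
rewrite !subn1 /=; split => h.
- rewrite -mxrank_tr hankel_tr; apply: key; last by rewrite -addn1.
  by rewrite -hankel_tr mxrank_tr.
- by apply: key h _; rewrite -addn1.
Qed.
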